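(* Let $k\ge 2$ be a natural number and $H$ a graph. Then $H\in\mathcal{H}_k$ if and only if every shortcut tree for $H$ (with respect to any length-function on $T\cup H$) has at most $k$ leaves.
   Context: All graphs are finite; parallel edges are allowed, loops are not. A length-function on a graph $G$ is a map $\ell:E(G)\to\mathbb{R}^+$ (strictly positive reals); $\ell(H)=\sum_{e\in E(H)}\ell(e)$ for subgraphs $H$, which carry the restricted length-function. $\mathrm{sd}_G(A)$ is the minimum of $\ell(S)$ over connected subgraphs $S\subseteq G$ with $A\subseteq V(S)$ ($\infty$ if none). $H\subseteq G$ is $k$-geodesic in $G$ if $\mathrm{sd}_H(A)=\mathrm{sd}_G(A)$ for all $A\subseteq V(H)$ with $|A|\le k$, and fully geodesic if it is $k$-geodesic for all $k$. For $k\ge2$, $\mathcal{H}_k$ is the class of all graphs $H$ such that for every graph $G\supseteq H$ and every length-function on $G$ for which $H$ is $k$-geodesic in $G$, $H$ is fully geodesic in $G$. $L(T)$ is the set of leaves of a tree $T$. Shortcut tree: let $H$ be a graph, $T$ a tree, both subgraphs of $T\cup H$, and $\ell$ a length-function on $T\cup H$. Then $T$ is a shortcut tree for $H$ if (SCT1) $V(T)\cap V(H)=L(T)$; (SCT2) $E(T)\cap E(H)=\emptyset$; (SCT3) $\ell(T)<\mathrm{sd}_H(L(T))$; (SCT4) for every proper subset $B\subsetneq L(T)$, $\mathrm{sd}_H(B)\le\mathrm{sd}_T(B)$. *)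

(* Defs.v *)
From HB Require Import structures.
From mathcomp Require Import all_boot all_order all_algebra.
Set Implicit Arguments. Unset Strict Implicit. Unset Printing Implicit Defensive.
Import Order.TTheory GRing.Theory Num.Theory.
Local Open Scope ring_scope.

(* A finite multigraph: finite vertex and edge types; each edge has two
   distinct endpoints (parallel edges allowed, no loops). *)
Record graph := Graph {
  gV : finType;
  gE : finType;
  gends : gE -> gV * gV;
  gnoloop : forall e, (gends e).1 != (gends e).2 }.

Section Graphs.
Variable G : graph.

Definition joins (e : gE G) (x y : gV G) : bool :=
  (gends e == (x, y)) || (gends e == (y, x)).

Definition subgraphb (VS : {set gV G}) (ES : {set gE G}) : bool :=
  [forall e in ES, ((gends e).1 \in VS) && ((gends e).2 \in VS)].

Definition adj (ES : {set gE G}) : rel (gV G) :=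
  fun x y => [exists e in ES, joins e x y].

Definition connectedb (VS : {set gV G}) (ES : {set gE G}) : bool :=
  [forall x in VS, forall y in VS, connect (adj ES) x y].

Definition treeb (VS : {set gV G}) (ES : {set gE G}) : bool :=
  [&& subgraphb VS ES, VS != set0, connectedb VS ES &
      [forall e in ES, ~~ connectedb VS (ES :\ e)]].

Definition degree (ES : {set gE G}) (v : gV G) : nat :=
  #|[set e in ES | ((gends e).1 == v) || ((gends e).2 == v)]|.

Definition leaves (VS : {set gV G}) (ES : {set gE G}) : {set gV G} :=
  [set v in VS | degree ES v == 1%N].

Variable R : realFieldType.

Definition len (l : gE G -> R) (ES : {set gE G}) : R := \sum_(e in ES) l e.

(* option R models R \cup {infinity}; None = infinity *)
Definition omin (x y : option R) : option R :=
  match x, y with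
  | None, _ => y
  | _, None => x
  | Some a, Some b => Some (Num.min a b)
  end.

Definition sd (l : gE G -> R) (VS : {set gV G}) (ES : {set gE G})
    (A : {set gV G}) : option R :=
  \big[omin/None]_(p : {set gV G} * {set gE G} |
      [&& subgraphb p.1 p.2, p.1 \subset VS, p.2 \subset ES,
          connectedb p.1 p.2 & A \subset p.1])
    Some (len l p.2).

End Graphs.

Definition ole {R : realFieldType} (x y : option R) : bool :=
  match x, y with
  | _, None => true
  | None, Some _ => false
  | Some a, Some b => a <= b
  end.

Definition olt {R : realFieldType} (x y : option R) : bool :=
  match x, y with
  | None, _ => false
  | Some _, None => true
  | Some a, Some b => a < b
  end.

Definition embedding (H G : graph) (f : gV H -> gV G) (g : gE H -> gE G) : Prop :=
  injective f /\ injective g /\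
  forall e, joins (g e) (f (gends e).1) (f (gends e).2).

Definition lengthfun (G : graph) (R : realFieldType) (l : gE G -> R) : Prop :=
  forall e, 0 < l e.

Definition k_geodesic (R : realFieldType) (k : nat) (H G : graph)
    (f : gV H -> gV G) (g : gE H -> gE G) (l : gE G -> R) : Prop :=
  forall A : {set gV H}, (#|A| <= k)%N ->
    sd (l \o g) [set: gV H] [set: gE H] A = sd l [set: gV G] [set: gE G] (f @: A).

Definition fully_geodesic (R : realFieldType) (H G : graph)
    (f : gV H -> gV G) (g : gE H -> gE G) (l : gE G -> R) : Prop :=
  forall k, k_geodesic k f g l.

Definition in_Hk (R : realFieldType) (k : nat) (H : graph) : Prop :=
  forall (G : graph) (f : gV H -> gV G) (g : gE H -> gE G) (l : gE G -> R),
    embedding f g -> lengthfun l ->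
    k_geodesic k f g l -> fully_geodesic f g l.

(* G = T \cup H where H is embedded via (f, g) and T = (VT, ET) is a subgraph
   of G; T is a shortcut tree for H w.r.t. the length-function l on G. *)
Definition shortcut_tree (R : realFieldType) (H G : graph)
    (f : gV H -> gV G) (g : gE H -> gE G)
    (VT : {set gV G}) (ET : {set gE G}) (l : gE G -> R) : Prop :=
  (forall v : gV G, v \in VT \/ v \in f @: [set: gV H]) /\
  (forall e : gE G, e \in ET \/ e \in g @: [set: gE H]) /\
  treeb VT ET /\
  VT :&: (f @: [set: gV H]) = leaves VT ET /\
  ET :&: (g @: [set: gE H]) = set0 /\
  olt (Some (len l ET))
                 (sd (l \o g) [set: gV H] [set: gE H] (f @^-1: leaves VT ET)) /\
  (forall B : {set gV G}, B \proper leaves VT ET ->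
                ole (sd (l \o g) [set: gV H] [set: gE H] (f @^-1: B))
                    (sd l VT ET B)).

(* Main.v *)
Require Import Defs.
From HB Require Import structures.
From mathcomp Require Import all_boot all_order all_algebra.
From mathcomp Require Import ring lra.
Set Implicit Arguments. Unset Strict Implicit. Unset Printing Implicit Defensive.
Import Order.TTheory GRing.Theory Num.Theory.

Section Big.
Local Open Scope ring_scope.
Variable R : realFieldType.

Lemma ole_refl (x : option R) : ole x x.
Proof. by case: x => //= a. Qed.

Lemma ole_trans (x y z : option R) : ole x y -> ole y z -> ole x z.
Proof. by case: x; case: y; case: z => //= a b c; apply: le_trans. Qed.

Lemma ole_anti (x y : option R) : ole x y -> ole y x -> x = y.
Proof. by case: x; case: y => //= a b h1 h2; congr Some; apply/eqP; rewrite eq_le h1 h2. Qed.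

Lemma ole_olt_trans (x y z : option R) : ole x y -> olt y z -> olt x z.
Proof. by case: x; case: y; case: z => //= a b c; apply: le_lt_trans. Qed.

Lemma olt_ole_trans (x y z : option R) : olt x y -> ole y z -> olt x z.
Proof. by case: x; case: y; case: z => //= a b c; apply: lt_le_trans. Qed.

Lemma olt_irr (x : option R) : ~~ olt x x.
Proof. by case: x => //= a; rewrite ltxx. Qed.

Lemma ole_total (x y : option R) : ~~ ole x y -> olt y x.
Proof. by case: x; case: y => //= a b; rewrite -ltNge. Qed.

Lemma omin_le_l (x y : option R) : ole (omin x y) x.
Proof. by case: x; case: y => //= a b; rewrite ge_min lexx ?orbT. Qed.

Lemma omin_le_r (x y : option R) : ole (omin x y) y.
Proof. by case: x; case: y => //= a b; rewrite ge_min lexx ?orbT. Qed.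

Lemma ole_omin (z x y : option R) : ole z x -> ole z y -> ole z (omin x y).
Proof. by case: x; case: y; case: z => //= a b c h1 h2; rewrite le_min h1 h2. Qed.

Variables (T : finType) (P : pred T) (F : T -> R).

Lemma big_omin_le i : P i -> ole (\big[@omin R/None]_(j | P j) Some (F j)) (Some (F i)).
Proof.
have : i \in index_enum T by rewrite mem_index_enum.
elim: (index_enum T) => [|j r IH] //= ; rewrite big_cons.
rewrite inE => /orP [/eqP <- Pi|ir Pi].
  by rewrite Pi; apply: omin_le_l.
case: (P j); last exact: IH.
exact: ole_trans (omin_le_r _ _) (IH ir Pi).
Qed.

Lemma big_omin_ge m : (forall i, P i -> m <= F i) ->
  ole (Some m) (\big[@omin R/None]_(j | P j) Some (F j)).
Proof.
move=> H; elim: (index_enum T) => [|j r IH]; first by rewrite big_nil.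
rewrite big_cons; case Pj: (P j) => //.
by apply: ole_omin => //=; apply: H.
Qed.

Lemma big_omin_wit : (\big[@omin R/None]_(j | P j) Some (F j)) = None \/
  exists i, P i /\ (\big[@omin R/None]_(j | P j) Some (F j)) = Some (F i).
Proof.
elim: (index_enum T) => [|j r IH]; first by rewrite big_nil; left.
rewrite big_cons; case Pj: (P j) => //.
case: IH => [->|[i [Pi ->]]]; first by right; exists j.
right; rewrite /omin /Num.min; case: ifP => _; [by exists j| by exists i].
Qed.
End Big.

Section Conn.
Variables (T1 T2 : finType).

Lemma connect_hom (e1 : rel T1) (e2 : rel T2) (phi : T1 -> T2) :
  (forall x y, e1 x y -> connect e2 (phi x) (phi y)) ->
  forall x y, connect e1 x y -> connect e2 (phi x) (phi y).
Proof.
move=> H x y /connectP [p pth ->]; elim: p x pth => [|z p IH] x /=; first by rewrite connect0.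
move=> /andP [exz pth]; exact: connect_trans (H _ _ exz) (IH _ pth).
Qed.

Lemma connect_restr (e1 e2 : rel T1) a :
  (forall x y, connect e1 a x -> e1 x y -> e2 x y) ->
  forall b, connect e1 a b -> connect e2 a b.
Proof.
move=> H b /connectP [p pth ->].
suff: forall x, connect e1 a x -> path e1 x p -> connect e2 x (last x p).
  by move=> /(_ a (connect0 _ _) pth).
move=> {pth}.
elim: p => [|z p IH] x /=; first by rewrite connect0.
move=> cax /andP [exz pth].
have caz : connect e1 a z by apply: connect_trans cax (connect1 exz).
exact: connect_trans (connect1 (H _ _ cax exz)) (IH _ caz pth).
Qed.
End Conn.

Section Graph.
Variable G : graph.
Implicit Types (VS : {set gV G}) (ES : {set gE G}) (A : {set gV G}) (e : gE G) (x y z w a b : gV G).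

Definition wit VS ES A (p : {set gV G} * {set gE G}) : bool :=
  [&& subgraphb p.1 p.2, p.1 \subset VS, p.2 \subset ES,
          connectedb p.1 p.2 & A \subset p.1].

Lemma joinsC e x y : joins e x y = joins e y x.
Proof. by rewrite /joins orbC. Qed.

Lemma joins_ends e x y : joins e x y ->
  (x = (gends e).1 /\ y = (gends e).2) \/ (x = (gends e).2 /\ y = (gends e).1).
Proof. by rewrite /joins => /orP [/eqP -> | /eqP ->]; [left|right]. Qed.

Lemma joins_self e : joins e (gends e).1 (gends e).2.
Proof. by rewrite /joins -surjective_pairing eqxx. Qed.

Lemma adjC ES x y : adj ES x y = adj ES y x.
Proof.
by apply/existsP/existsP => [] [e /andP [eE j]]; exists e; rewrite eE joinsC.
Qed.

Lemma adj_sym ES : symmetric (adj ES).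
Proof. by move=> x y; apply: adjC. Qed.

Lemma connectC ES x y : connect (adj ES) x y = connect (adj ES) y x.
Proof. by apply: (sym_connect_sym (adj_sym ES)). Qed.

Lemma adjP ES x y : reflect (exists2 e, e \in ES & joins e x y) (adj ES x y).
Proof.
apply: (iffP existsP) => [[e /andP [eE j]]|[e eE j]]; first by exists e.
by exists e; rewrite eE.
Qed.

Lemma adj_edge ES e : e \in ES -> adj ES (gends e).1 (gends e).2.
Proof. by move=> eE; apply/adjP; exists e => //; apply: joins_self. Qed.

Lemma adj_sub ES ES' x y : ES \subset ES' -> adj ES x y -> adj ES' x y.
Proof. by move=> sub /adjP [e eE j]; apply/adjP; exists e => //; apply: (subsetP sub). Qed.

Lemma connect_subE ES ES' x y : ES \subset ES' -> connect (adj ES) x y -> connect (adj ES') x y.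
Proof.
move=> sub; apply: (connect_hom (phi := id)) => a b h; apply: connect1.
exact: adj_sub h.
Qed.

Lemma subgraph_ends VS ES e : subgraphb VS ES -> e \in ES ->
  (gends e).1 \in VS /\ (gends e).2 \in VS.
Proof. by move=> /forall_inP H /H /andP. Qed.

Lemma subgraphP VS ES : reflect (forall e, e \in ES -> (gends e).1 \in VS /\ (gends e).2 \in VS)
   (subgraphb VS ES).
Proof.
apply: (iffP forall_inP) => H e eE; first by apply/andP; apply: H.
by apply/andP; apply: H.
Qed.

Lemma adj_in VS ES x y : subgraphb VS ES -> adj ES x y -> x \in VS /\ y \in VS.
Proof.
by move=> sg /adjP [e eE /joins_ends [] [-> ->]]; case: (subgraph_ends sg eE).
Qed.

Lemma connect_in VS ES x y : subgraphb VS ES -> x \in VS -> connect (adj ES) x y -> y \in VS.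
Proof.
move=> sg xV /connectP [p pth ->]; elim: p x xV pth => [|z p IH] x xV //= /andP [a pth].
by apply: IH pth; case: (adj_in sg a).
Qed.

Lemma connectedP VS ES : reflect (forall x y, x \in VS -> y \in VS -> connect (adj ES) x y)
  (connectedb VS ES).
Proof.
apply: (iffP forall_inP) => [H x y xV yV|H x xV]; first by move: (H x xV) => /forall_inP; apply.
by apply/forall_inP => y yV; apply: H.
Qed.

Definition incid e v := ((gends e).1 == v) || ((gends e).2 == v).

Lemma connect_first ES a b : connect (adj ES) a b -> a != b ->
  exists2 e, e \in ES & incid e a.
Proof.
move=> /connectP [[|z p] pth ->] /=; first by rewrite eqxx.
move: pth => /= /andP [/adjP [e eE /joins_ends [] [ha _]] _] _; exists e => //;
  by rewrite /incid ha eqxx ?orbT.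
Qed.

Lemma connect_isolated ES a b : (forall e, e \in ES -> ~~ incid e a) ->
  connect (adj ES) a b -> b = a.
Proof.
move=> H c; apply/eqP; rewrite eq_sym; apply/negPn/negP => nab.
by case: (connect_first c nab) => e eE; apply/negP; apply: H.
Qed.

Lemma first_use ES e w z : connect (adj ES) w z ->
  [\/ connect (adj (ES :\ e)) w z, connect (adj (ES :\ e)) w (gends e).1 |
      connect (adj (ES :\ e)) w (gends e).2].
Proof.
move=> /connectP [p pth ->]; elim: p w pth => [|y p IH] w /=; first by move=> _; constructor 1.
move=> /andP [/adjP [e1 e1E j] pth].
case: (eqVneq e1 e) j => [-> | ne] j.
  by case: (joins_ends j) => [] [-> _]; [constructor 2| constructor 3]; rewrite connect0.
have a : adj (ES :\ e) w y by apply/adjP; exists e1 => //; rewrite !inE ne.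
case: (IH _ pth) => h; [constructor 1| constructor 2| constructor 3];
  exact: connect_trans (connect1 a) h.
Qed.

Variable R : realFieldType.
Local Open Scope ring_scope.
Implicit Types (l : gE G -> R) (X Y : {set gE G}).

Lemma sd_le l VS ES A p : wit VS ES A p -> ole (sd l VS ES A) (Some (len l p.2)).
Proof. move=> w; exact: (@big_omin_le _ _ (wit VS ES A) (fun p => len l p.2) p w). Qed.

Lemma sd_ge l VS ES A m : (forall p, wit VS ES A p -> m <= len l p.2) ->
  ole (Some m) (sd l VS ES A).
Proof. move=> H; exact: (@big_omin_ge _ _ (wit VS ES A) (fun p => len l p.2) m H). Qed.

Lemma sd_cases l VS ES A : sd l VS ES A = None \/
  exists p, wit VS ES A p /\ sd l VS ES A = Some (len l p.2).
Proof. exact: (@big_omin_wit _ _ (wit VS ES A) (fun p => len l p.2)). Qed.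

Lemma sd_opt l VS ES A m : sd l VS ES A = Some m ->
  exists p, [/\ wit VS ES A p, len l p.2 = m & forall q, wit VS ES A q -> m <= len l q.2].
Proof.
case: (sd_cases l VS ES A) => [->//|[p [w e]]]; rewrite e => [[<-]].
exists p; split => // q wq; have := sd_le l wq; by rewrite e.
Qed.

Lemma len_ge0 l X : (forall e, 0 < l e) -> 0 <= len l X.
Proof. by move=> lf; rewrite /len; apply: sumr_ge0 => e _; apply: ltW. Qed.

Lemma len_sub l X Y : (forall e, 0 < l e) -> X \subset Y -> len l X <= len l Y.
Proof.
move=> lf sub; rewrite /len (big_setID (A:=Y) X) /= (setIidPr sub) lerDl.
by apply: sumr_ge0 => e _; apply: ltW.
Qed.

Lemma len_D1 l X e : e \in X -> len l X = l e + len l (X :\ e).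
Proof. by move=> eX; rewrite /len (big_setD1 e eX). Qed.

Lemma len_split l X Y : Y \subset X -> len l X = len l Y + len l (X :\: Y).
Proof. by move=> sub; rewrite /len (big_setID (A:=X) Y) /= (setIidPr sub). Qed.

Lemma len_U l X Y : (forall e, 0 < l e) -> len l (X :|: Y) <= len l X + len l Y.
Proof.
move=> lf; rewrite (@len_split l (X :|: Y) X) ?subsetUl // lerD2l.
by apply: len_sub => //; apply/subsetP => e; rewrite !inE; case: (e \in X).
Qed.

End Graph.

Lemma sd_mono (R : realFieldType) (G1 G2 : graph) (l1 : gE G1 -> R) (l2 : gE G2 -> R)
   V1 E1 A1 V2 E2 A2 :
  (forall q, wit V2 E2 A2 q -> exists p, wit V1 E1 A1 p /\ (len l1 p.2 <= len l2 q.2)%R) ->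
  ole (sd l1 V1 E1 A1) (sd l2 V2 E2 A2).
Proof.
move=> H; case: (sd_cases l2 V2 E2 A2) => [->|[q [wq ->]]]; first by case: (sd _ _ _ _).
case: (H q wq) => p [wp le]; apply: ole_trans (sd_le l1 wp) _; exact: le.
Qed.

Section Map.
Variables (G1 G2 : graph) (phi : gV G1 -> gV G2) (psi : gE G1 -> gE G2).

Lemma map_joins e a b : joins (psi e) (phi (gends e).1) (phi (gends e).2) ->
  joins e a b -> joins (psi e) (phi a) (phi b).
Proof. by move=> j /joins_ends [] [-> ->] //; rewrite joinsC. Qed.

Lemma map_sub_conn (D : {set gE G1}) (VP : {set gV G1}) (EP : {set gE G1}) :
  subgraphb VP EP -> connectedb VP EP ->
  (forall e, e \in EP -> e \in D -> joins (psi e) (phi (gends e).1) (phi (gends e).2)) ->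
  (forall e, e \in EP -> e \notin D -> phi (gends e).1 = phi (gends e).2) ->
  subgraphb (phi @: VP) (psi @: (EP :&: D)) && connectedb (phi @: VP) (psi @: (EP :&: D)).
Proof.
move=> sg cn HD HnD; apply/andP; split.
  apply/subgraphP => _ /imsetP [e /setIP [eP eD] ->].
  case: (subgraph_ends sg eP) => h1 h2.
  by case: (joins_ends (HD e eP eD)) => [] [<- <-]; rewrite !imset_f.
apply/connectedP => _ _ /imsetP [x xV ->] /imsetP [y yV ->].
apply: (connect_hom (e1 := adj EP)) => [a b /adjP [e eP j]|]; last by move/connectedP: cn; apply.
case eD: (e \in D).
  apply: connect1; apply/adjP; exists (psi e); first by rewrite imset_f // inE eP eD.
  exact: map_joins (HD e eP eD) j.
by case: (joins_ends j) => [] [-> ->]; rewrite (HnD e eP) ?eD // connect0.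
Qed.
End Map.

Section Emb.
Variables (R : realFieldType) (H G : graph) (f : gV H -> gV G) (g : gE H -> gE G).
Local Open Scope ring_scope.

Lemma len_imset (l : gE G -> R) (X : {set gE H}) : injective g ->
  len l (g @: X) = len (l \o g) X.
Proof. by move=> ig; rewrite /len big_imset //= => x y _ _; apply: ig. Qed.

Lemma emb_le (l : gE G -> R) (A : {set gV H}) : embedding f g ->
  ole (sd l [set: gV G] [set: gE G] (f @: A)) (sd (l \o g) [set: gV H] [set: gE H] A).
Proof.
move=> [fi [gi fj]]; apply: sd_mono => -[VP EP] /and5P [sg _ _ cn sA] /=.
exists (f @: VP, g @: EP); split; last by rewrite /= len_imset.
have := map_sub_conn (phi := f) (psi := g) (D := setT) sg cn (fun e _ _ => fj e) (fun e _ => ltac:(by rewrite inE)).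
rewrite setIT => /andP [h1 h2].
by rewrite /wit /= h1 h2 !subsetT imsetS.
Qed.
End Emb.

Section Opt.
Variables (R : realFieldType) (G : graph) (l : gE G -> R) (X VS : {set gV G}) (ES : {set gE G}).
Local Open Scope ring_scope.
Hypothesis lf : forall e, 0 < l e.
Hypothesis wS : wit [set: gV G] [set: gE G] X (VS, ES).
Hypothesis opt : forall q, wit [set: gV G] [set: gE G] X q -> len l ES <= len l q.2.

Lemma opt_sg : subgraphb VS ES.
Proof. by case/and5P: wS. Qed.
Lemma opt_cn : connectedb VS ES.
Proof. by case/and5P: wS. Qed.
Lemma opt_X : X \subset VS.
Proof. by case/and5P: wS. Qed.

Lemma opt_bridge e : e \in ES -> ~~ connectedb VS (ES :\ e).
Proof.
move=> eE; apply/negP => cn.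
have w : wit [set: gV G] [set: gE G] X (VS, ES :\ e).
  rewrite /wit /= cn opt_X !subsetT /= andbT; apply/subgraphP => e2.
  by rewrite inE => /andP [_ /(subgraph_ends opt_sg)].
move: (opt w) => /=; rewrite (len_D1 l eE) => h; move: (lf e).
by rewrite ltNge -(lerD2r (len l (ES :\ e))) add0r h.
Qed.

Lemma opt_leaf v : v \in VS -> degree ES v = 1%N -> v \in X.
Proof.
move=> vV /eqP /cards1P [e He].
have : e \in [set e] by rewrite inE.
rewrite -He inE => /andP [eE ie].
have inc e2 : e2 \in ES -> incid e2 v -> e2 = e.
  by move=> e2E i2; apply/set1P; rewrite -He inE e2E.
apply/negPn/negP => vX.
set u := if (gends e).1 == v then (gends e).2 else (gends e).1.
have uv : u != v.
  rewrite /u; case: ifP => [/eqP <-|]; first by rewrite eq_sym gnoloop.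
  by move=> h; move: ie; rewrite /incid h.
set phi := fun w => if w == v then u else w.
have w : wit [set: gV G] [set: gE G] X (VS :\ v, ES :\ e).
  rewrite /wit /= !subsetT /=; apply/and3P; split.
  - apply/subgraphP => e2; rewrite !inE => /andP [ne e2E].
    case: (subgraph_ends opt_sg e2E) => h1 h2.
    have ni : ~~ incid e2 v by apply/negP => /(inc _ e2E) /eqP; rewrite (negPf ne).
    move: ni; rewrite /incid negb_or => /andP [n1 n2].
    by rewrite n1 h1 n2 h2.
  - apply/connectedP => x y; rewrite !inE => /andP [xv xV] /andP [yv yV].
    have cxy : connect (adj ES) x y by move/connectedP: opt_cn; apply.
    suff : connect (adj (ES :\ e)) (phi x) (phi y) by rewrite /phi (negPf xv) (negPf yv).
    apply: (connect_hom _ cxy).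
    move=> a b /adjP [e2 e2E j].
    have [ee|ne] := eqVneq e2 e.
      rewrite ee in j; have ends_uv : forall z, (z == (gends e).1) || (z == (gends e).2) ->
         (if z == v then u else z) = u.
        move=> z; case: ifP => // zv.
        move=> /orP [/eqP zE|/eqP zE]; rewrite /u; case: ifP => h1 //.
          by move: zv; rewrite zE h1.
        by move: ie zv; rewrite /incid h1 /= zE => ->.
      by case: (joins_ends j) => [] [-> ->]; rewrite /phi !ends_uv ?eqxx ?orbT // connect0.
    have ni : ~~ incid e2 v by apply/negP => /(inc _ e2E) /eqP; rewrite (negPf ne).
    move: ni; rewrite /incid negb_or => /andP [n1 n2].
    case: (joins_ends j) => [] [-> ->]; rewrite /phi (negPf n1) (negPf n2);
      apply: connect1; apply/adjP; exists e2; rewrite ?inE ?ne //;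
      by rewrite /joins -surjective_pairing eqxx ?orbT.
  - apply/subsetP => x xX; rewrite !inE (subsetP opt_X _ xX) andbT.
    by apply: contraNneq vX => <-.
move: (opt w) => /=; rewrite (len_D1 l eE) => h; move: (lf e).
by rewrite ltNge -(lerD2r (len l (ES :\ e))) add0r h.
Qed.

Lemma opt_incid v w : v \in VS -> w \in VS -> v != w -> exists2 e, e \in ES & incid e v.
Proof.
move=> vV wV vw; apply: (connect_first (b := w)) => //.
by move/connectedP: opt_cn; apply.
Qed.
End Opt.

Section Constr.
Variables (R : realFieldType) (H G : graph) (f : gV H -> gV G) (g : gE H -> gE G).
Variables (l : gE G -> R) (A : {set gV H}) (VS : {set gV G}) (ES : {set gE G}) (eps : R).
Local Open Scope ring_scope.
Hypothesis emb : embedding f g.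
Hypothesis lf : forall e, 0 < l e.
Hypothesis eps_pos : 0 < eps.
Hypothesis wS : wit [set: gV G] [set: gE G] (f @: A) (VS, ES).
Hypothesis opt : forall q, wit [set: gV G] [set: gE G] (f @: A) q -> len l ES <= len l q.2.

Definition VX := {v : gV G | v \in VS}.
Definition EX := {e : gE G | e \in ES}.
Definition AX := {a : gV H | a \in A}.
Variable s0 : VX.
Variable e0 : gE G.

Definition tox (w : gV G) : VX := insubd s0 w.

Lemma toxK w : w \in VS -> val (tox w) = w.
Proof. by move=> wV; rewrite /tox insubdK. Qed.

Definition ends' (e : (gE H + (EX + AX))%type) : ((gV H + VX) * (gV H + VX))%type :=
  match e with
  | inl e => (inl (gends e).1, inl (gends e).2)
  | inr (inl e) => (inr (tox (gends (val e)).1), inr (tox (gends (val e)).2))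
  | inr (inr a) => (inl (val a), inr (tox (f (val a))))
  end.

Lemma noloop' e : (ends' e).1 != (ends' e).2.
Proof.
case: e => [e|[e|a]] //=.
  by apply: contra (gnoloop e) => /eqP [->].
case: (subgraph_ends (opt_sg wS) (valP e)) => h1 h2.
apply: contra (gnoloop (val e)) => /eqP [] /(congr1 val).
by rewrite !toxK // => ->.
Qed.

Definition G' := @Graph (gV H + VX)%type (gE H + (EX + AX))%type ends' noloop'.

Definition pi (v : gV G') : gV G := match v with inl a => f a | inr x => val x end.
Definition rho (e : gE G') : gE G :=
  match e with inl e => g e | inr (inl e) => val e | inr (inr _) => e0 end.
Definition l' (e : gE G') : R :=
  match e with inl e => l (g e) | inr (inl e) => l (val e) | inr (inr _) => eps end.
Definition VT : {set gV G'} := [set v : gV G' | if v is inl a then a \in A else true].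
Definition ET : {set gE G'} := [set e : gE G' | if e is inl _ then false else true].
Definition DC : {set gE G'} := [set e : gE G' | if e is inr (inl _) then true else false].

Definition f' : gV H -> gV G' := inl.
Definition g' : gE H -> gE G' := inl.

Lemma emb' : embedding f' g'.
Proof.
split; first by move=> x y [].
split; first by move=> x y [].
by move=> e; rewrite /joins /= eqxx.
Qed.

Lemma lf' : lengthfun l'.
Proof. by case=> [e|[e|a]] /=. Qed.

Lemma cover_v (v : gV G') : v \in VT \/ v \in f' @: [set: gV H].
Proof. by case: v => [a|x]; [right; rewrite imset_f | left; rewrite inE]. Qed.

Lemma cover_e (e : gE G') : e \in ET \/ e \in g' @: [set: gE H].
Proof. by case: e => [e|e]; [right; rewrite imset_f | left; rewrite inE]. Qed.

Lemma sct2 : ET :&: (g' @: [set: gE H]) = set0.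
Proof.
apply/setP => e; rewrite !inE; case: e => // e /=.
by apply/negP => /imsetP [x _].
Qed.

Hypothesis cardA : (1 < #|A|)%N.

Lemma degreeE (G0 : graph) (E : {set gE G0}) v : degree E v = #|[set e in E | incid e v]|.
Proof. by []. Qed.

Lemma inrE (x y : VX) : (inr x == inr y :> gV G') = (x == y).
Proof. by []. Qed.
Lemma inlE (x y : gV H) : (inl x == inl y :> gV G') = (x == y).
Proof. by []. Qed.
Lemma inlrE (x : gV H) (y : VX) : (inl x == inr y :> gV G') = false.
Proof. by []. Qed.
Lemma inrlE (x : gV H) (y : VX) : (inr y == inl x :> gV G') = false.
Proof. by []. Qed.

Lemma incid_copy e (eE : e \in ES) (x : VX) :
  incid (G := G') (inr (inl (Sub e eE))) (inr x) = incid e (val x).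
Proof.
case: (subgraph_ends (opt_sg wS) eE) => h1 h2.
by rewrite /incid /= !inrE -!val_eqE /= !toxK.
Qed.

Lemma deg_inl a (aA : a \in A) : degree ET (inl a : gV G') = 1%N.
Proof.
rewrite degreeE (_ : [set e in ET | incid e (inl a : gV G')] = [set inr (inr (Sub a aA))]) ?cards1 //.
apply/setP => -[e|[e|b]]; rewrite !inE //=.
rewrite /incid /= inlE inrlE orbF.
rewrite [RHS](_ : _ = (b == Sub a aA)) //.
Qed.

Lemma inc_two (v : gV G') (e1 e2 : gE G') : e1 \in ET -> e2 \in ET -> e1 != e2 ->
  incid e1 v -> incid e2 v -> (1 < degree ET v)%N.
Proof.
move=> h1 h2 ne i1 i2; rewrite degreeE; apply/card_gt1P; exists e1, e2.
by rewrite inE h1 i1 inE h2 i2.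
Qed.

Lemma fA_sub : f @: A \subset VS.
Proof. exact: (opt_X wS). Qed.

Lemma deg_inr (x : VX) : (1 < degree ET (inr x : gV G'))%N.
Proof.
have [fi [gi _]] := emb.
have xV : val x \in VS := valP x.
have [w [wA wx]] : exists w, w \in f @: A /\ val x != w.
  have : (1 < #|f @: A|)%N by rewrite card_imset.
  move/card_gt1P => [y [z [yA zA yz]]].
  have [xy|xy] := eqVneq (val x) y; last by exists y.
  by exists z; rewrite xy.
have [e1 e1E i1] := opt_incid wS xV (subsetP fA_sub _ wA) wx.
case: (boolP (val x \in f @: A)) => [/imsetP [a aA xa]|nx].
  apply: (@inc_two _ (inr (inl (Sub e1 e1E))) (inr (inr (Sub a aA)))); rewrite ?inE //.
    by rewrite incid_copy.
  by rewrite /incid /= inrE -xa /tox valKd.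
have d1 : degree ES (val x) != 1%N.
  by apply: contra nx => /eqP; apply: (opt_leaf lf wS opt xV).
have d0 : (0 < degree ES (val x))%N.
  by rewrite degreeE card_gt0; apply/set0Pn; exists e1; rewrite inE e1E.
have : (1 < degree ES (val x))%N by rewrite ltn_neqAle eq_sym d1 d0.
rewrite degreeE => /card_gt1P [y1 [y2 []]]; rewrite !inE => /andP [y1E j1] /andP [y2E j2] ne.
apply: (@inc_two _ (inr (inl (Sub y1 y1E))) (inr (inl (Sub y2 y2E)))); rewrite ?inE ?incid_copy //.
Qed.

Lemma leavesE : leaves VT ET = f' @: A.
Proof.
apply/setP => -[a|x]; rewrite /leaves !inE /=.
  case aA: (a \in A) => /=.
    by rewrite (deg_inl aA) imset_f.
  by apply/esym/negbTE; apply/negP => /imsetP [b bA [ab]]; rewrite ab bA in aA.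
have -> : (degree ET (inr x : gV G') == 1%N) = false.
  by apply/negbTE; rewrite neq_ltn (deg_inr x) orbT.
by apply/esym/negbTE; apply/negP => /imsetP [b bA].
Qed.

Lemma sct1 : VT :&: (f' @: [set: gV H]) = leaves VT ET.
Proof.
rewrite leavesE; apply/setP => -[a|x]; rewrite !inE.
  by rewrite imset_f // andbT; apply/idP/idP => [aA|/imsetP [b bA [->]]//]; rewrite imset_f.
by rewrite /=; apply/idP/idP => /imsetP [b _].
Qed.

Lemma inVT_inr (x : VX) : (inr x : gV G') \in VT.
Proof. by rewrite inE. Qed.

Lemma sg_T : subgraphb VT ET.
Proof.
apply/subgraphP => -[e|[e|b]]; rewrite !inE //= => _; split => //.
exact: valP.
Qed.

Lemma copy_joins (e : gE G) (eE : e \in ES) a b : joins e a b ->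
  joins (G := G') (inr (inl (Sub e eE))) (inr (tox a)) (inr (tox b)).
Proof.
by case/joins_ends => [] [-> ->]; rewrite /joins /= eqxx ?orbT.
Qed.

Lemma conn_hub (v : gV G') : v \in VT -> connect (adj ET) v (inr s0).
Proof.
have inr_hub (x : VX) : connect (adj ET) (inr x : gV G') (inr s0).
  have c : connect (adj ES) (val x) (val s0).
    by move/connectedP: (opt_cn wS); apply; apply: valP.
  have := connect_hom (e2 := adj ET) (phi := fun w => inr (tox w) : gV G') _ c.
  rewrite /tox !valKd; apply => a b /adjP [e eE j].
  apply: connect1; apply/adjP; exists (inr (inl (Sub e eE))); first by rewrite inE.
  exact: copy_joins.
case: v => [a|x] //; rewrite inE /= => aA.
apply: connect_trans (inr_hub (tox (f a))).
apply: connect1; apply/adjP; exists (inr (inr (Sub a aA))); first by rewrite inE.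
by rewrite /joins /= eqxx.
Qed.

Lemma conn_T : connectedb VT ET.
Proof.
apply/connectedP => x y xV yV; apply: connect_trans (conn_hub xV) _.
by rewrite connectC; apply: conn_hub.
Qed.

Lemma bridge_T e : e \in ET -> ~~ connectedb VT (ET :\ e).
Proof.
case: e => [e|[c|b]]; rewrite inE // => _; apply/negP => /connectedP cn.
  have := opt_bridge lf wS opt (valP c); apply/negP/negPn; apply/connectedP => x y xV yV.
  have := cn (inr (tox x)) (inr (tox y)) (inVT_inr _) (inVT_inr _).
  move/(connect_hom (e2 := adj (ES :\ val c)) (phi := pi)); rewrite /= !toxK //; apply.
  move=> a b /adjP [e]; rewrite !inE => /andP [ne eT] j.
  case: e ne eT j => [e|[d|b']] // ne _ j.
    apply: connect1; apply/adjP; exists (val d).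
      by rewrite !inE (valP d) andbT; apply: contra ne => /eqP /val_inj ->.
    case: (subgraph_ends (opt_sg wS) (valP d)) => h1 h2.
    by case/joins_ends: j => [] [-> ->] /=; rewrite !toxK //; [apply: joins_self|rewrite joinsC; apply: joins_self].
  have fb : f (val b') \in VS by apply: (subsetP fA_sub); rewrite imset_f // (valP b').
  by case/joins_ends: j => [] [-> ->] /=; rewrite toxK // connect0.
have : (inl (val b) : gV G') \in VT by rewrite inE (valP b).
move/(cn _ (inr s0))=> /(_ (inVT_inr _)).
move/connect_isolated => /(_ _) h.
suff : (inr s0 : gV G') = inl (val b) by [].
apply: h => -[e|[d|b']]; rewrite !inE //= /incid /= ?inrlE //.
rewrite inlE orbF => /andP [ne _]; apply: contra ne => /eqP h2.
by apply/eqP; congr inr; congr inr; apply: val_inj.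
Qed.

Lemma tree_T : treeb VT ET.
Proof.
apply/and4P; split; [exact: sg_T| |exact: conn_T|].
  by apply/set0Pn; exists (inr s0); rewrite inE.
by apply/forall_inP => e eT; apply: bridge_T.
Qed.

Lemma len_ET : len l' ET = len l ES + (#|A|)%:R * eps.
Proof.
rewrite /len big_mkcond big_sumType /=.
rewrite big1 => [|i _]; last by rewrite inE.
rewrite add0r big_sumType /=.
rewrite (eq_bigr (fun i : EX => l (val i))) => [|i _]; last by rewrite inE.
rewrite (eq_bigr (fun i : AX => eps)) => [|i _]; last by rewrite inE.
rewrite [in RHS](big_sub ES) /=.
congr (_ + _).
rewrite sumr_const card_sig mulr_natl.
by rewrite cardE /= -cardE.
Qed.

Lemma preim_f'A : f' @^-1: (f' @: A) = A.
Proof.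
apply/setP => a; rewrite inE; apply/idP/idP => [/imsetP [b bA [->]] //|aA].
exact: imset_f.
Qed.

Hypothesis h3 : olt (Some (len l ES + (#|A|)%:R * eps)) (sd (l \o g) [set: gV H] [set: gE H] A).

Lemma sct3 : olt (Some (len l' ET))
   (sd (l' \o g') [set: gV H] [set: gE H] (f' @^-1: leaves VT ET)).
Proof. by rewrite leavesE preim_f'A len_ET. Qed.

Hypothesis IHA : forall B0 : {set gV H}, B0 \proper A ->
  sd (l \o g) [set: gV H] [set: gE H] B0 = sd l [set: gV G] [set: gE G] (f @: B0).

Lemma sct4 (B : {set gV G'}) : B \proper leaves VT ET ->
  ole (sd (l' \o g') [set: gV H] [set: gE H] (f' @^-1: B)) (sd l' VT ET B).
Proof.
rewrite leavesE => /properP [sB [x xA xB]].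
have pB : f' @^-1: B \proper A.
  apply/properP; split.
    by apply/subsetP => a; rewrite inE => /(subsetP sB) /imsetP [b bA [->]].
  by case/imsetP: xA => a aA xa; exists a => //; rewrite inE -xa.
rewrite (_ : l' \o g' = l \o g) // IHA //.
apply: sd_mono => -[VP EP] /and5P [sg sVP sEP cn sBP] /=.
have HD : forall e, e \in EP -> e \in DC -> joins (rho e) (pi (gends e).1) (pi (gends e).2).
  move=> [e|[d|b]]; rewrite inE //= => _ _.
  case: (subgraph_ends (opt_sg wS) (valP d)) => h1 h2.
  by rewrite !toxK //; apply: joins_self.
have HnD : forall e, e \in EP -> e \notin DC -> pi (gends e).1 = pi (gends e).2.
  move=> [e|[d|b]]; rewrite inE //= => eP _.
    by move: (subsetP sEP _ eP); rewrite inE.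
  rewrite toxK //; apply: (subsetP fA_sub); rewrite imset_f //; exact: valP.
have := map_sub_conn (D := DC) sg cn HD HnD => /andP [sg' cn'].
exists (pi @: VP, rho @: (EP :&: DC)); split.
  rewrite /wit /= sg' cn' !subsetT /=; apply/subsetP => _ /imsetP [a aB ->].
  rewrite (_ : f a = pi (inl a)) //; apply: imset_f; apply: (subsetP sBP).
  by move: aB; rewrite inE.
rewrite /= /len big_imset /=; last first.
  move=> [e|[d|b]] [e'|[d'|b']]; rewrite !inE /= ?andbF //= => _ _ h.
  by congr inr; congr inl; apply: val_inj.
apply: le_trans (len_sub lf' (subsetIl EP DC)).
rewrite /len le_eqVlt; apply/orP; left; apply/eqP; apply: eq_bigr.
by move=> [e|[d|b]]; rewrite !inE ?andbF.
Qed.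

Lemma sc_T : shortcut_tree f' g' VT ET l'.
Proof.
split; first exact: cover_v.
split; first exact: cover_e.
split; first exact: tree_T.
split; first exact: sct1.
split; first exact: sct2.
split; first exact: sct3.
exact: sct4.
Qed.

End Constr.

Section P6sec.
Local Open Scope ring_scope.

Lemma eps_choice (R : realFieldType) (m : R) (t : option R) (n : nat) : (0 < n)%N ->
  olt (Some m) t -> exists eps : R, 0 < eps /\ olt (Some (m + n%:R * eps)) t.
Proof.
move=> n0; case: t => [s|] /= ms; last by exists 1; rewrite ltr01.
have nz : (n%:R : R) != 0 by rewrite pnatr_eq0 -lt0n.
exists ((s - m) / (2 * n%:R)); split.
  by rewrite divr_gt0 ?subr_gt0 // mulr_gt0 ?ltr0n.
have -> : n%:R * ((s - m) / (2 * n%:R)) = (s - m) / 2 by field.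
lra.
Qed.

Lemma dir2 (R : realFieldType) (k : nat) (H : graph) : (2 <= k)%N ->
  (forall (G : graph) (f : gV H -> gV G) (g : gE H -> gE G)
          (VT : {set gV G}) (ET : {set gE G}) (l : gE G -> R),
     embedding f g -> lengthfun l -> shortcut_tree f g VT ET l ->
     (#|leaves VT ET| <= k)%N) ->
  in_Hk R k H.
Proof.
move=> k2 Hsc G f g l emb lf kg.
have emb0 := emb; case: emb0 => [fi [gi fj]].
suff : forall n (A : {set gV H}), (#|A| <= n)%N ->
    sd (l \o g) [set: gV H] [set: gE H] A = sd l [set: gV G] [set: gE G] (f @: A).
  by move=> h k' A _; apply: (h #|A|).
elim => [|n IH] A.
  by rewrite leqn0 => /eqP cA; apply: kg; rewrite cA.
rewrite leq_eqVlt => /orP [/eqP cA|]; last by apply: IH.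
case: (leqP #|A| k) => [|kA]; first by apply: kg.
case lesd: (ole (sd (l \o g) [set: gV H] [set: gE H] A) (sd l [set: gV G] [set: gE G] (f @: A))).
  by apply: ole_anti => //; apply: emb_le.
have := ole_total (negbT lesd).
case sG: (sd l [set: gV G] [set: gE G] (f @: A)) => [m|] // ltm.
have [[VS ES] [wS lm optS]] := sd_opt sG.
rewrite -lm in ltm.
have A0 : (0 < #|A|)%N by exact: leq_ltn_trans (leq0n k) kA.
have [a aA] : exists a, a \in A by apply/set0Pn; rewrite -card_gt0.
have fV : f a \in VS by move: wS => /and5P [_ _ _ _ /subsetP]; apply; rewrite imset_f.
pose s0 : VX VS := Sub (f a) fV.
have [b [bA ab]] : exists b, b \in A /\ a != b.
  have : (1 < #|A|)%N by exact: leq_ltn_trans (ltnW k2) kA.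
  move/card_gt1P => [y [z [yA zA yz]]].
  have [xy|xy] := eqVneq a y; last by exists y.
  by exists z; rewrite xy.
have fbV : f b \in VS by move: wS => /and5P [_ _ _ _ /subsetP]; apply; rewrite imset_f.
have fab : f a != f b by apply: contra ab => /eqP /fi ->.
have [e0 _ _] := opt_incid wS fV fbV fab.
have [eps [eps0 h3]] := eps_choice A0 ltm.
have opt' : forall q, wit [set: gV G] [set: gE G] (f @: A) q -> len l ES <= len l q.2.
  by move=> q wq; rewrite lm; apply: optS.
have cardA : (1 < #|A|)%N by exact: leq_ltn_trans (ltnW k2) kA.
have IHA : forall B0 : {set gV H}, B0 \proper A ->
    sd (l \o g) [set: gV H] [set: gE H] B0 = sd l [set: gV G] [set: gE G] (f @: B0).
  move=> B0 /proper_card; rewrite cA ltnS; apply: IH.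
have := Hsc _ _ _ _ _ _ (emb' wS s0) (@lf' _ _ _ _ g _ _ _ _ _ lf eps0 wS s0)
   (sc_T emb lf eps0 wS opt' s0 e0 cardA h3 IHA).
rewrite (leavesE emb lf wS opt' s0 cardA) card_imset; last by move=> x y [].
by rewrite leqNgt kA.
Qed.

End P6sec.

Lemma connect_clos (T : finType) (e : rel T) (Z : pred T) x y :
  (forall a b, Z a -> e a b -> Z b) -> Z x -> connect e x y -> Z y.
Proof.
move=> H Zx /connectP [p pth ->]; elim: p x Zx pth => [|z p IH] x Zx //= /andP [exz pth].
exact: IH (H _ _ Zx exz) pth.
Qed.

Section Gen.
Variable G : graph.
Implicit Types (VS : {set gV G}) (ES : {set gE G}) (e : gE G) (x y v a b : gV G).

Lemma subgraph_mono VS ES ES' : subgraphb VS ES -> ES' \subset ES -> subgraphb VS ES'.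
Proof.
move=> sg sub; apply/subgraphP => e eE; apply: (subgraph_ends sg); exact: (subsetP sub).
Qed.

Definition oth e v := if (gends e).1 == v then (gends e).2 else (gends e).1.

Lemma oth_neq e v : incid e v -> oth e v != v.
Proof.
rewrite /incid /oth; case: ifP => [/eqP <- _|h _]; first by rewrite eq_sym gnoloop.
by rewrite h.
Qed.

Lemma incid_joins e v a b : incid e v -> joins e a b ->
  (a = v /\ b = oth e v) \/ (a = oth e v /\ b = v).
Proof.
rewrite /incid /oth => i /joins_ends [] [-> ->]; case: ifP => [/eqP ->|h].
- by left.
- by move: i; rewrite h /= => /eqP ->; right.
- by right.
- by move: i; rewrite h /= => /eqP ->; left.
Qed.

Lemma joins_oth e v : incid e v -> joins e v (oth e v).
Proof.
rewrite /incid /oth /joins; case: ifP => [/eqP <- _|h /= /eqP <-].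
  by rewrite -surjective_pairing eqxx.
by rewrite -surjective_pairing eqxx orbT.
Qed.

Lemma ends_incid e : incid e (gends e).1 /\ incid e (gends e).2.
Proof. by rewrite /incid !eqxx orbT. Qed.

Lemma leaf_rem ES e v x y : e \in ES -> (forall e2, e2 \in ES -> incid e2 v -> e2 = e) ->
  incid e v -> x != v -> y != v -> connect (adj ES) x y -> connect (adj (ES :\ e)) x y.
Proof.
move=> eE inc ie xv yv cxy.
set u := oth e v.
set phi := fun w => if w == v then u else w.
suff : connect (adj (ES :\ e)) (phi x) (phi y) by rewrite /phi (negPf xv) (negPf yv).
apply: (connect_hom _ cxy) => a b /adjP [e2 e2E j].
have [ee|ne] := eqVneq e2 e.
  rewrite ee in j; case: (incid_joins ie j) => [] [-> ->];
  by rewrite /phi eqxx (negPf (oth_neq ie)) connect0.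
have ni : ~~ incid e2 v by apply/negP => /(inc _ e2E) /eqP; rewrite (negPf ne).
move: ni; rewrite /incid negb_or => /andP [n1 n2].
case: (joins_ends j) => [] [-> ->]; rewrite /phi (negPf n1) (negPf n2);
  apply: connect1; apply/adjP; exists e2; rewrite ?inE ?ne //;
  by rewrite /joins -surjective_pairing eqxx ?orbT.
Qed.

Lemma connect_sub_restr ES (Z : {set gV G}) v0 w :
  (forall e, e \in ES -> ((gends e).1 \in Z) = ((gends e).2 \in Z)) ->
  v0 \in Z -> connect (adj ES) v0 w ->
  connect (adj [set e in ES | (gends e).1 \in Z]) v0 w.
Proof.
move=> cl vZ c.
have Zc : forall y, connect (adj ES) v0 y -> y \in Z.
  move=> y; apply: (connect_clos (Z := fun y => y \in Z)) vZ => a b /= aZ /adjP [e eE j].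
  by case: (joins_ends j) aZ => [] [-> ->]; rewrite (cl e eE).
apply: (connect_restr _ c) => a b ca /adjP [e eE j]; apply/adjP; exists e => //.
rewrite inE eE /=; have := Zc _ ca.
by case: (joins_ends j) => [] [-> _] //; rewrite (cl e eE).
Qed.
End Gen.

Section Dir1.
Variables (R : realFieldType) (H G : graph) (f : gV H -> gV G) (g : gE H -> gE G).
Variables (VT : {set gV G}) (ET : {set gE G}) (l : gE G -> R).
Local Open Scope ring_scope.
Hypothesis emb : embedding f g.
Hypothesis lf : forall e, 0 < l e.
Hypothesis sc : shortcut_tree f g VT ET l.

Definition L := leaves VT ET.

Lemma f_inj : injective f. Proof. by case: emb. Qed.
Lemma g_inj : injective g. Proof. by case: emb => _ []. Qed.
Lemma fg_joins e : joins (g e) (f (gends e).1) (f (gends e).2). Proof. by case: emb => _ []. Qed.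

Lemma notET_g e : e \notin ET -> exists e', e = g e'.
Proof.
case: sc => _ [/(_ e) [->//|/imsetP [e' _ ->]] _] _; by exists e'.
Qed.

Lemma g_notET e' : g e' \notin ET.
Proof.
case: sc => _ [_ [_ [_ [s2 _]]]]; apply/negP => h.
have : g e' \in ET :&: (g @: [set: gE H]) by rewrite inE h imset_f.
by rewrite s2 inE.
Qed.

Lemma g_ends e' : (gends (g e')).1 \in f @: [set: gV H] /\ (gends (g e')).2 \in f @: [set: gV H].
Proof.
by case: (joins_ends (fg_joins e')) => [] [<- <-]; rewrite !imset_f.
Qed.

Lemma nonH_ET e v : v \notin f @: [set: gV H] -> incid e v -> e \in ET.
Proof.
move=> nv ie; apply/negPn/negP => /notET_g [e' ee]; move: ie nv; rewrite ee /incid.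
by case: (g_ends e') => h1 h2 /orP [] /eqP <-; rewrite ?h1 ?h2.
Qed.

Lemma sct1E : VT :&: (f @: [set: gV H]) = L.
Proof. by case: sc => _ [_ [_ [s1 _]]]. Qed.

Lemma L_VT v : v \in L -> v \in VT.
Proof. by rewrite -sct1E inE => /andP []. Qed.

Lemma L_img v : v \in L -> v \in f @: [set: gV H].
Proof. by rewrite -sct1E inE => /andP []. Qed.

Lemma VT_img v : v \in VT -> v \in f @: [set: gV H] -> v \in L.
Proof. by move=> h1 h2; rewrite -sct1E inE h1 h2. Qed.

Lemma treeT : treeb VT ET.
Proof. by case: sc => _ [_ [t _]]. Qed.

Lemma sgT : subgraphb VT ET.
Proof. by case/and4P: treeT. Qed.

Lemma deg_L x : x \in L -> degree ET x = 1%N.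
Proof. by rewrite inE => /andP [_ /eqP]. Qed.

Lemma sct4' (B : {set gV G}) : B \proper L ->
  ole (sd (l \o g) [set: gV H] [set: gE H] (f @^-1: B)) (sd l VT ET B).
Proof. by case: sc => _ [_ [_ [_ [_ [_ s4]]]]]; apply: s4. Qed.

Lemma sct3' : olt (Some (len l ET)) (sd (l \o g) [set: gV H] [set: gE H] (f @^-1: L)).
Proof. by case: sc => _ [_ [_ [_ [_ [s3 _]]]]]. Qed.

Lemma connect_emb (EP : {set gE H}) x y : connect (adj EP) x y ->
  connect (adj (g @: EP)) (f x) (f y).
Proof.
apply: connect_hom => a b /adjP [e eP j]; apply: connect1; apply/adjP.
by exists (g e); [rewrite imset_f | apply: map_joins (fg_joins e) j].
Qed.

Lemma finvP (w : gV G) (x0 : gV H) : w \in f @: [set: gV H] ->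
  f (odflt x0 [pick x | f x == w]) = w.
Proof.
case/imsetP => x _ ->; case: pickP => [y /eqP //|/(_ x)]; by rewrite eqxx.
Qed.

Lemma finvK (x x0 : gV H) : odflt x0 [pick y | f y == f x] = x.
Proof. by apply: f_inj; apply: finvP; rewrite imset_f. Qed.

Lemma pullback (A : {set gV H}) VS ES a : a \in A -> ES :&: ET = set0 ->
  wit [set: gV G] [set: gE G] (f @: A) (VS, ES) ->
  exists p, wit [set: gV H] [set: gE H] A p /\ len (l \o g) p.2 <= len l ES.
Proof.
move=> aA noT /and5P [sg _ _ cn sA] /=.
have nT e : e \in ES -> e \notin ET.
  move=> eE; apply/negP => eT; have : e \in ES :&: ET by rewrite inE eE eT.
  by rewrite noT inE.
have VSi : forall v, v \in VS -> v \in f @: [set: gV H].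
  move=> v vV; have faV : f a \in VS by apply: (subsetP sA); rewrite imset_f.
  have [->|ne] := eqVneq v (f a); first by rewrite imset_f.
  have [e eE ie] := connect_first (connectedP _ _ cn v (f a) vV faV) ne.
  case: (notET_g (nT e eE)) => e' ee; move: ie; rewrite ee /incid.
  by case: (g_ends e') => h1 h2 /orP [] /eqP <-.
have ES_g : ES \subset g @: [set: gE H].
  by apply/subsetP => e /nT /notET_g [e' ->]; rewrite imset_f.
exists (f @^-1: VS, g @^-1: ES); split; last first.
  rewrite /= -len_imset; last exact: g_inj.
  rewrite le_eqVlt; apply/orP; left; apply/eqP; congr len.
  apply/setP => e; apply/idP/idP => [/imsetP [e' ] | eE]; first by rewrite inE => h ->.
  by case/imsetP: (subsetP ES_g _ eE) => e' _ ee; rewrite ee imset_f // inE -ee.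
rewrite /wit /= !subsetT /=; apply/and3P; split.
- apply/subgraphP => e'; rewrite inE => /(subgraph_ends sg) [].
  by case: (joins_ends (fg_joins e')) => [] [<- <-] h1 h2; rewrite !inE.
- apply/connectedP => x y; rewrite !inE => xV yV.
  have := connectedP _ _ cn _ _ xV yV.
  move/(connect_hom (e2 := adj (g @^-1: ES)) (phi := fun w => odflt x [pick z | f z == w])).
  rewrite !finvK; apply => u w /adjP [e eE j].
  case: (notET_g (nT e eE)) => e' ee; rewrite ee in eE j.
  apply: connect1; apply/adjP; exists e'; first by rewrite inE.
  by case: (joins_ends j) (joins_ends (fg_joins e')) => [] [-> ->] [] [h1 h2];
    rewrite -h1 -h2 !finvK ?joins_self // joinsC joins_self.
- by apply/subsetP => x xA; rewrite inE (subsetP sA) // imset_f.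
Qed.
Section Comp.
Variables (A : {set gV H}) (VS : {set gV G}) (ES : {set gE G}) (a : gV H) (e0 : gE G).
Hypothesis aA : a \in A.
Hypothesis wS : wit [set: gV G] [set: gE G] (f @: A) (VS, ES).
Hypothesis e0S : e0 \in ES.
Hypothesis e0T : e0 \in ET.
Hypothesis AL : (#|A| < #|L|)%N.
Hypothesis IH : forall VS' ES', (#|ES' :&: ET| < #|ES :&: ET|)%N ->
  wit [set: gV G] [set: gE G] (f @: A) (VS', ES') ->
  exists p, wit [set: gV H] [set: gE H] A p /\ len (l \o g) p.2 <= len l ES'.

Definition Goal := exists p, wit [set: gV H] [set: gE H] A p /\ len (l \o g) p.2 <= len l ES.

Lemma reduce VS' ES' : (#|ES' :&: ET| < #|ES :&: ET|)%N ->
  wit [set: gV G] [set: gE G] (f @: A) (VS', ES') -> len l ES' <= len l ES -> Goal.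
Proof.
move=> lt w le; case: (IH lt w) => p [wp lp]; exists p; split => //.
exact: le_trans lp le.
Qed.

Lemma sgS : subgraphb VS ES. Proof. by case/and5P: wS. Qed.
Lemma cnS : connectedb VS ES. Proof. by case/and5P: wS. Qed.
Lemma sAS : f @: A \subset VS. Proof. by case/and5P: wS. Qed.

Definition ETS := ES :&: ET.
Definition v0 := (gends e0).1.
Definition Z := [set w | connect (adj ETS) v0 w].
Definition EC := [set e in ETS | (gends e).1 \in Z].
Definition B := Z :&: L.

Lemma e0TS : e0 \in ETS. Proof. by rewrite inE e0S e0T. Qed.

Lemma ETS_cl e : e \in ETS -> ((gends e).1 \in Z) = ((gends e).2 \in Z).
Proof.
move=> eE; rewrite !inE; apply/idP/idP => h; apply: connect_trans h _; apply: connect1.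
  exact: adj_edge.
by rewrite adjC; apply: adj_edge.
Qed.

Lemma v0Z : v0 \in Z. Proof. by rewrite inE connect0. Qed.

Lemma Z_VS w : w \in Z -> w \in VS.
Proof.
rewrite inE; apply: (connect_in (subgraph_mono sgS (subsetIl ES ET))).
by case: (subgraph_ends sgS e0S).
Qed.

Lemma Z_VT w : w \in Z -> w \in VT.
Proof.
rewrite inE; apply: (connect_in (subgraph_mono sgT (subsetIr ES ET))).
by case: (subgraph_ends sgT e0T).
Qed.

Lemma Z_nonH w : w \in Z -> w \notin L -> w \notin f @: [set: gV H].
Proof. by move=> wZ; apply: contra => /(VT_img (Z_VT wZ)). Qed.

Lemma EC_closed e w : e \in ES -> incid e w -> w \in Z -> w \notin L -> e \in EC.
Proof.
move=> eE ie wZ wL; have eT := nonH_ET (Z_nonH wZ wL) ie.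
have eTS : e \in ETS by rewrite inE eE eT.
rewrite inE eTS /=; move: ie; rewrite /incid => /orP [] /eqP h; first by rewrite h.
by rewrite (ETS_cl eTS) h.
Qed.

Lemma EC_ETS : EC \subset ETS. Proof. by apply/subsetP => e; rewrite inE => /andP []. Qed.
Lemma EC_ES : EC \subset ES. Proof. by apply: subset_trans EC_ETS (subsetIl _ _). Qed.
Lemma EC_ET : EC \subset ET. Proof. by apply: subset_trans EC_ETS (subsetIr _ _). Qed.

Lemma EC_ends e : e \in EC -> (gends e).1 \in Z /\ (gends e).2 \in Z.
Proof. by rewrite inE => /andP [eT h]; rewrite -(ETS_cl eT). Qed.

Lemma e0C : e0 \in EC. Proof. by rewrite inE e0TS v0Z. Qed.

Lemma sgC : subgraphb Z EC.
Proof. by apply/subgraphP => e /EC_ends. Qed.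

Lemma Z_conn w : w \in Z -> connect (adj EC) v0 w.
Proof.
rewrite inE => c; apply: (connect_sub_restr _ _ c); last exact: v0Z.
exact: ETS_cl.
Qed.

Lemma cnC : connectedb Z EC.
Proof.
apply/connectedP => x y xZ yZ; apply: connect_trans (Z_conn yZ).
by rewrite connectC; apply: Z_conn.
Qed.

Lemma B_nonempty : B != set0.
Proof.
apply/negP => /eqP B0.
have nL w : w \in Z -> w \notin L.
  move=> wZ; apply/negP => wL; have : w \in B by rewrite inE wZ wL.
  by rewrite B0 inE.
have faV : f a \in VS by apply: (subsetP sAS); rewrite imset_f.
have cv : connect (adj ES) v0 (f a).
  by apply: (connectedP _ _ cnS) => //; apply: Z_VS v0Z.
have faZ : f a \in Z.
  have step : forall x y, x \in Z -> adj ES x y -> y \in Z.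
    move=> x y xZ /adjP [e eE j].
    have ie : incid e x by case: (joins_ends j) => [] [-> _]; case: (ends_incid e).
    have eC := EC_closed eE ie xZ (nL _ xZ).
    by case: (joins_ends j) => [] [_ ->]; case: (EC_ends eC).
  exact: (@connect_clos _ _ (fun w => w \in Z) _ _ step v0Z cv).
by move: (nL _ faZ); rewrite (VT_img (Z_VT faZ)) // imset_f.
Qed.
Lemma BL : B \subset L. Proof. exact: subsetIr. Qed.

Lemma caseB : B \proper L -> Goal.
Proof.
move=> pB.
have [b0 b0B] := set0Pn _ B_nonempty.
have b0Z : b0 \in Z by move: b0B; rewrite inE => /andP [].
have b0L : b0 \in L by move: b0B; rewrite inE => /andP [].
have wC : wit VT ET B (Z, EC).
  rewrite /wit /= sgC cnC EC_ET /=; apply/andP; split; last exact: subsetIl.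
  by apply/subsetP => w /Z_VT.
have := ole_trans (sct4' pB) (sd_le l wC).
case: (sd_cases (l \o g) [set: gV H] [set: gE H] (f @^-1: B)) => [->//|[[VP EP] [wP ->]]] /= lePC.
case/and5P: wP => sgP _ _ cnP sBP.
set VS' := (VS :\: (Z :\: L)) :|: (f @: VP).
set ES' := (ES :\: EC) :|: (g @: EP).
have BfVP : B \subset f @: VP.
  apply/subsetP => w wB; have := L_img (subsetP BL _ wB).
  case/imsetP => x _ wx; rewrite wx imset_f //; apply: (subsetP sBP).
  by rewrite inE -wx.
have conP : forall x y, x \in f @: VP -> y \in f @: VP -> connect (adj ES') x y.
  move=> _ _ /imsetP [x xP ->] /imsetP [y yP ->].
  apply: (connect_subE (subsetUr _ _)); apply: connect_emb.
  by apply: (connectedP _ _ cnP).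
have nZL : forall w, w \in Z :\: L -> forall e, e \in ES -> incid e w -> e \in EC.
  move=> w; rewrite inE => /andP [wL wZ] e eE ie; exact: EC_closed eE ie wZ wL.
have inVS' : forall w, w \in VS -> w \notin Z :\: L -> w \in VS'.
  by move=> w wV wn; rewrite /VS' in_setU in_setD wn wV.
have w' : wit [set: gV G] [set: gE G] (f @: A) (VS', ES').
  rewrite /wit /= !subsetT /=; apply/and3P; split.
  - apply/subgraphP => e; rewrite inE => /orP [|/imsetP [e' e'P ->]].
      rewrite inE => /andP [neC eE]; case: (subgraph_ends sgS eE) => h1 h2.
      case: (ends_incid e) => i1 i2.
      split; apply: inVS' => //; apply/negP.
        by move=> /nZL /(_ e eE i1) eC; rewrite eC in neC.
      by move=> /nZL /(_ e eE i2) eC; rewrite eC in neC.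
    case: (subgraph_ends sgP e'P) => h1 h2.
    by case: (joins_ends (fg_joins e')) => [] [<- <-]; rewrite !inE !imset_f ?orbT.
  - have hub : forall w, w \in VS' -> connect (adj ES') w b0.
      move=> w; rewrite inE => /orP [|wP]; last by apply: conP => //; apply: (subsetP BfVP).
      rewrite inE => /andP [wZL wV].
      set phi := fun w => if w \in Z :\: L then b0 else w.
      have : connect (adj ES) w b0 by apply: (connectedP _ _ cnS) => //; apply: Z_VS.
      move/(connect_hom (e2 := adj ES') (phi := phi)).
      have -> : phi b0 = b0 by rewrite /phi inE b0L.
      rewrite /phi (negPf wZL); apply => x y /adjP [e eE j].
      have [eC|neC] := boolP (e \in EC).
        have phiB : forall z, z \in Z -> phi z \in B.
          move=> z zZ; rewrite /phi; case: ifP => //.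
          by rewrite in_setD zZ andbT => /negbFE zL; rewrite /B in_setI zZ zL.
        have [xZ yZ] : x \in Z /\ y \in Z.
          by case: (EC_ends eC) => h1 h2; case: (joins_ends j) => [] [-> ->].
        by apply: conP; apply: (subsetP BfVP); apply: phiB.
      have nx : forall z, (z == (gends e).1) || (z == (gends e).2) -> z \notin Z :\: L.
        move=> z hz; apply/negP => /nZL /(_ e eE) h; move: neC; rewrite h //.
        by rewrite /incid (eq_sym (gends e).1) (eq_sym (gends e).2).
      have [xn yn] : x \notin Z :\: L /\ y \notin Z :\: L.
        by case: (joins_ends j) => [] [-> ->]; split; apply: nx; rewrite eqxx ?orbT.
      rewrite /phi (negPf xn) (negPf yn); apply: connect1; apply/adjP; exists e => //.
      by rewrite /ES' in_setU in_setD neC eE.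
    apply/connectedP => x y xV yV; apply: connect_trans (hub _ xV) _.
    by rewrite connectC; apply: hub.
  - apply/subsetP => _ /imsetP [x xA ->]; apply: inVS'.
      by apply: (subsetP sAS); rewrite imset_f.
    apply/negP; rewrite in_setD => /andP [nL fZ].
    by move: nL; rewrite (VT_img (Z_VT fZ)) // imset_f.
apply: (reduce _ w').
  apply: proper_card; apply/properP; split.
    apply/subsetP => e; rewrite in_setI /ES' in_setU in_setD.
    move=> /andP [/orP [/andP [_ eE]|/imsetP [e' _ ee]] eT]; first by rewrite in_setI eE eT.
    by move: eT; rewrite ee (negPf (g_notET e')).
  exists e0; first by rewrite inE e0S e0T.
  rewrite in_setI /ES' in_setU in_setD e0C /= negb_and; apply/orP; left.
  apply/negP => /imsetP [e' _ ee].
  by move: e0T; rewrite ee (negPf (g_notET e')).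
rewrite /ES'; apply: le_trans (len_U _ _ lf) _.
rewrite len_imset; last exact: g_inj.
rewrite (len_split l EC_ES) addrC lerD2r.
exact: lePC.
Qed.

Definition ex x := odflt e0 [pick e in ET | incid e x].

Lemma exP x : x \in L -> [/\ ex x \in ET, incid (ex x) x &
  forall e, e \in ET -> incid e x -> e = ex x].
Proof.
move=> xL; have /eqP := deg_L xL; rewrite /degree => /cards1P [e1 He].
have pk : forall e, (e \in ET) && incid e x = (e == e1).
  by move=> e; rewrite -in_set1 -He inE.
rewrite /ex; case: pickP => [e|/(_ e1)]; last by rewrite pk eqxx.
rewrite pk => /eqP -> /=; have := pk e1; rewrite eqxx => /andP [h1 h2].
by split => // e2 eT ie2; apply/eqP; rewrite -pk eT.
Qed.

Definition ux x := oth (ex x) x.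

Lemma ex_ends x : x \in L -> ((gends (ex x)).1 = x \/ (gends (ex x)).1 = ux x) /\
                              ((gends (ex x)).2 = x \/ (gends (ex x)).2 = ux x).
Proof.
move=> xL; case: (exP xL) => _ ie _.
by case: (incid_joins ie (joins_self (ex x))) => [] [-> ->]; split; auto.
Qed.

Lemma ux_neq x : x \in L -> ux x != x.
Proof. by move=> xL; case: (exP xL) => _ ie _; apply: oth_neq. Qed.

Hypothesis LZ : L \subset Z.

Lemma ex_ETS x : x \in L -> ex x \in ETS.
Proof.
move=> xL; case: (exP xL) => exT ie uniq; rewrite inE exT andbT.
have xZ : x \in Z := subsetP LZ _ xL.
have [xv|xv] := eqVneq x v0.
  by rewrite -(uniq e0 e0T) //; rewrite xv; case: (ends_incid e0).
have c : connect (adj ETS) x v0 by rewrite connectC; move: xZ; rewrite inE.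
have [e eE ie2] := connect_first c xv.
by move: eE; rewrite inE => /andP [eS eT]; rewrite -(uniq e eT ie2).
Qed.

Lemma ux_Z x : x \in L -> ux x \in Z.
Proof.
move=> xL; have xZ : x \in Z := subsetP LZ _ xL.
move: xZ; rewrite !inE => c; apply: connect_trans c (connect1 _).
apply/adjP; exists (ex x); first exact: ex_ETS.
by case: (exP xL) => _ ie _; apply: joins_oth.
Qed.

Definition Xs x := [set w | connect (adj (ES :\ ex x)) x w].

Lemma caseR1 x : x \in L -> connect (adj (ES :\ ex x)) x (ux x) -> Goal.
Proof.
move=> xL cxu; have exE : ex x \in ES by move: (ex_ETS xL); rewrite inE => /andP [].
have exT : ex x \in ET by move: (ex_ETS xL); rewrite inE => /andP [].
have w' : wit [set: gV G] [set: gE G] (f @: A) (VS, ES :\ ex x).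
  rewrite /wit /= !subsetT sAS (subgraph_mono sgS (subsetDl _ _)) /= andbT.
  apply/connectedP => y z yV zV; have := connectedP _ _ cnS _ _ yV zV.
  apply: (connect_hom (phi := id)) => p q /adjP [e eE j].
  have [ee|ne] := eqVneq e (ex x); last first.
    by apply: connect1; apply/adjP; exists e; rewrite // !inE ne eE.
  case: (exP xL) => _ ie _; rewrite ee in j.
  by case: (incid_joins ie j) => [] [-> ->] //; rewrite connectC.
apply: (reduce _ w'); last by apply: len_sub => //; apply: subsetDl.
apply: proper_card; apply/properP; split.
  by apply: setSI; apply: subsetDl.
by exists (ex x); [rewrite inE exE exT | rewrite !inE eqxx].
Qed.

Lemma caseR2 x : x \in L -> Xs x :&: f @: A = set0 -> Goal.
Proof.
move=> xL XA.
have exE : ex x \in ES by move: (ex_ETS xL); rewrite inE => /andP [].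
have exT : ex x \in ET by move: (ex_ETS xL); rewrite inE => /andP [].
set Y := [set w | connect (adj (ES :\ ex x)) (ux x) w].
set EY := [set e in ES :\ ex x | (gends e).1 \in Y].
have Ycl : forall e, e \in ES :\ ex x -> ((gends e).1 \in Y) = ((gends e).2 \in Y).
  move=> e eE; rewrite !inE; apply/idP/idP => h; apply: connect_trans h _; apply: connect1.
    exact: adj_edge.
  by rewrite adjC; apply: adj_edge.
have uY : ux x \in Y by rewrite inE connect0.
have w' : wit [set: gV G] [set: gE G] (f @: A) (Y, EY).
  rewrite /wit /= !subsetT /=; apply/and3P; split.
  - apply/subgraphP => e; rewrite inE => /andP [eE h1]; split => //.
    by rewrite -(Ycl e eE).
  - have hub : forall w, w \in Y -> connect (adj EY) (ux x) w.
      by move=> w; rewrite inE => c; apply: (connect_sub_restr Ycl uY c).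
    apply/connectedP => y z yY zY; apply: connect_trans (hub _ zY).
    by rewrite connectC; apply: hub.
  - apply/subsetP => _ /imsetP [a' a'A ->].
    have fV : f a' \in VS by apply: (subsetP sAS); rewrite imset_f.
    have xV : x \in VS := Z_VS (subsetP LZ _ xL).
    have nX : connect (adj (ES :\ ex x)) (f a') x -> False.
      move=> c; have : f a' \in Xs x :&: f @: A by rewrite !inE connectC c imset_f.
      by rewrite XA inE.
    have := first_use (ex x) (connectedP _ _ cnS _ _ fV xV).
    case: (ex_ends xL) => [[h1|h1] [h2|h2]] [c|c|c]; rewrite ?h1 ?h2 in c;
      try (by case: (nX c)); by rewrite inE connectC.
apply: (reduce _ w'); last first.
  apply: len_sub => //; apply/subsetP => e; rewrite inE => /andP [].
  by rewrite inE => /andP [].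
apply: proper_card; apply/properP; split.
  apply: setSI; apply/subsetP => e; rewrite inE => /andP [].
  by rewrite inE => /andP [].
by exists (ex x); [rewrite inE exE exT | rewrite !inE eqxx].
Qed.

Lemma C1 x y : x \in L -> y \in L -> y != x ->
  ~~ connect (adj (ES :\ ex x)) x (ux x) -> y \notin Xs x.
Proof.
move=> xL yL yx nR1; apply/negP; rewrite inE => cxy.
case: (exP xL) => exT ie uniq.
have cuy : connect (adj ETS) (ux x) y.
  have := ux_Z xL; have := subsetP LZ _ yL; rewrite !inE => c1 c2.
  by apply: connect_trans _ c1; rewrite connectC.
have c2 := leaf_rem (ex_ETS xL) (fun e2 h => uniq e2 (subsetP (subsetIr ES ET) _ h))
   ie (ux_neq xL) yx cuy.
have c3 : connect (adj (ES :\ ex x)) (ux x) y.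
  by apply: connect_subE c2; apply: setSD; apply: subsetIl.
by move/negP: nR1; apply; apply: connect_trans cxy _; rewrite connectC.
Qed.

Lemma C2 x y w : x \in L -> y \in L -> x != y ->
  ~~ connect (adj (ES :\ ex x)) x (ux x) -> ~~ connect (adj (ES :\ ex y)) y (ux y) ->
  w \in Xs x -> w \in Xs y -> False.
Proof.
move=> xL yL xy n1 n2; rewrite !inE => cxw cyw.
have cwy : connect (adj (ES :\ ex y)) w y by rewrite connectC.
have s1 : (ES :\ ex y) :\ ex x \subset ES :\ ex x.
  by apply/subsetP => e; rewrite !inE => /and3P [-> _ ->].
have s2 : (ES :\ ex y) :\ ex x \subset ES :\ ex y.
  by apply/subsetP => e; rewrite !inE => /and3P [_ -> ->].
have yx : y != x by rewrite eq_sym.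
have endc : forall z, z = x \/ z = ux x -> connect (adj ((ES :\ ex y) :\ ex x)) w z -> False.
  move=> z [->|->] c.
    have := C1 yL xL xy n2; rewrite inE; apply/negP/negPn.
    by apply: connect_trans cyw (connect_subE s2 c).
  by move/negP: n1; apply; apply: connect_trans cxw (connect_subE s1 c).
case: (first_use (ex x) cwy) => c.
- have := C1 xL yL yx n1; rewrite inE; apply/negP/negPn.
  by apply: connect_trans cxw (connect_subE s1 c).
- by case: (ex_ends xL) => h _; apply: endc h c.
- by case: (ex_ends xL) => _ h; apply: endc h c.
Qed.

Lemma caseFull : Goal.
Proof.
case: (boolP [exists x in L, connect (adj (ES :\ ex x)) x (ux x)]) => [/exists_inP [x xL c]|nR1].
  exact: caseR1 xL c.
case: (boolP [exists x in L, Xs x :&: f @: A == set0]) => [/exists_inP [x xL /eqP h]|nR2].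
  exact: caseR2 xL h.
exfalso.
have n1 := exists_inPn nR1.
have n2 := exists_inPn nR2.
pose h x := odflt x [pick w in Xs x :&: f @: A].
have hP : forall x, x \in L -> h x \in Xs x :&: f @: A.
  move=> x xL; rewrite /h; case: pickP => [w //|].
  by case/set0Pn: (n2 x xL) => w wX /(_ w); rewrite wX.
have hinj : {in L &, injective h}.
  move=> x y xL yL hxy; apply/eqP/negPn/negP => xy.
  have := hP x xL; have := hP y yL; rewrite -hxy !in_setI => /andP [hy _] /andP [hx _].
  exact: C2 xL yL xy (n1 x xL) (n1 y yL) hx hy.
have : (#|L| <= #|A|)%N.
  rewrite -(card_in_imset hinj) -(card_imset A f_inj); apply: subset_leq_card.
  by apply/subsetP => _ /imsetP [x xL ->]; move: (hP x xL); rewrite in_setI => /andP [].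
by rewrite leqNgt AL.
Qed.


End Comp.

Lemma key_step (A : {set gV H}) VS ES : (#|A| < #|L|)%N ->
  (forall VS' ES', (#|ES' :&: ET| < #|ES :&: ET|)%N ->
    wit [set: gV G] [set: gE G] (f @: A) (VS', ES') ->
    exists p, wit [set: gV H] [set: gE H] A p /\ len (l \o g) p.2 <= len l ES') ->
  wit [set: gV G] [set: gE G] (f @: A) (VS, ES) ->
  exists p, wit [set: gV H] [set: gE H] A p /\ len (l \o g) p.2 <= len l ES.
Proof.
move=> AL IH wS.
have [A0|[a aA]] := set_0Vmem A.
  exists (set0, set0); rewrite /wit /= A0 !sub0set /= andbT; split.
    by apply/andP; split; [apply/subgraphP => e; rewrite inE|apply/connectedP => x y; rewrite inE].
  by rewrite /len big_set0; apply: len_ge0.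
have [T0|[e0 e0ST]] := set_0Vmem (ES :&: ET).
  exact: pullback aA T0 wS.
move: e0ST; rewrite inE => /andP [e0S e0T].
have BL : B ES e0 \subset L := subsetIr _ _.
have [BeL|BnL] := eqVneq (B ES e0) L.
  apply: (caseFull wS e0S e0T AL IH).
  by rewrite -BeL; apply: subsetIl.
apply: (caseB aA wS e0S e0T IH).
by rewrite properEneq BnL BL.
Qed.

Lemma key (A : {set gV H}) VS ES : (#|A| < #|L|)%N ->
  wit [set: gV G] [set: gE G] (f @: A) (VS, ES) ->
  exists p, wit [set: gV H] [set: gE H] A p /\ len (l \o g) p.2 <= len l ES.
Proof.
move=> AL; move: {2}#|ES :&: ET| (leqnn #|ES :&: ET|) => n.
elim: n VS ES => [|n IHn] VS ES cnt; apply: key_step => // VS' ES' lt.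
  by move: (leq_trans lt cnt).
by apply: IHn; rewrite -ltnS; apply: leq_trans lt cnt.
Qed.

End Dir1.

Lemma dir1 (R : realFieldType) (k : nat) (H : graph) : in_Hk R k H ->
  forall (G : graph) (f : gV H -> gV G) (g : gE H -> gE G)
          (VT : {set gV G}) (ET : {set gE G}) (l : gE G -> R),
     embedding f g -> lengthfun l -> shortcut_tree f g VT ET l ->
     (#|leaves VT ET| <= k)%N.
Proof.
move=> Hin G f g VT ET l emb lf sc; rewrite leqNgt; apply/negP => kL.
have kg : k_geodesic k f g l.
  move=> A Ak; apply: ole_anti; last exact: emb_le.
  apply: sd_mono => -[VS ES] w.
  apply: (key emb lf sc _ w).
  exact: leq_ltn_trans Ak kL.
have fg := Hin G f g l emb lf kg #|f @^-1: leaves VT ET| (f @^-1: leaves VT ET) (leqnn _).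
have fL : f @: (f @^-1: leaves VT ET) = leaves VT ET.
  apply/setP => v; apply/idP/idP => [/imsetP [x] |vL]; first by rewrite inE => h ->.
  by have := L_img sc vL; case/imsetP => x _ vx; rewrite vx imset_f // inE -vx.
rewrite fL in fg.
have wT : wit [set: gV G] [set: gE G] (leaves VT ET) (VT, ET).
  have /and4P [sg _ cn _] := treeT sc.
  by rewrite /wit /= sg cn !subsetT /=; apply/subsetP => v; rewrite inE => /andP [].
have := ole_olt_trans (sd_le l wT) (sct3' sc).
by rewrite -fg => h; move: (olt_irr (sd (l \o g) [set: gV H] [set: gE H] (f @^-1: leaves VT ET))); rewrite h.
Qed.


Theorem proposition6p2 (R : realFieldType) (k : nat) (H : graph) :
  (2 <= k)%N ->
  (in_Hk R k H <->
   forall (G : graph) (f : gV H -> gV G) (g : gE H -> gE G)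
          (VT : {set gV G}) (ET : {set gE G}) (l : gE G -> R),
     embedding f g -> lengthfun l -> shortcut_tree f g VT ET l ->
     (#|leaves VT ET| <= k)%N).
Proof.
move=> k2; split; first exact: dir1.
exact: dir2.
Qed.
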